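(* Let $\mathbf{S}=\mathbf{V}\boldsymbol{\Lambda}\mathbf{V}^{\mathsf{H}}$ and $\hat{\mathbf{S}}$ be $N\times N$ graph shift operators. Let $\mathbf{E}=\mathbf{U}\mathbf{M}\mathbf{U}^{\mathsf{H}}\in\mathcal{E}(\mathbf{S},\hat{\mathbf{S}})$ be a relative perturbation matrix whose norm satisfies $$d(\mathbf{S},\hat{\mathbf{S}})\le\|\mathbf{E}\|\le\varepsilon.$$ Then for any integral Lipschitz filter $\mathbf{h}$ with integral Lipschitz constant $C$, $$\|\mathbf{H}(\mathbf{S})-\mathbf{H}(\hat{\mathbf{S}})\|_{\mathcal{P}}\le 2C\left(1+\delta\sqrt{N}\right)\varepsilon+\mathcal{O}(\varepsilon^2),$$ where $\delta:=(\|\mathbf{U}-\mathbf{V}\|_2+1)^2-1$ is the eigenvector misalignment between $\mathbf{S}$ and $\mathbf{E}$.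
   Context: A graph shift operator is a real symmetric $N\times N$ matrix; $\mathbf{S}=\mathbf{V}\boldsymbol{\Lambda}\mathbf{V}^{\mathsf{H}}$ with $\mathbf{V}$ orthonormal eigenvectors and $\boldsymbol{\Lambda}$ diagonal; $\mathbf{E}$ is symmetric with $\mathbf{U}$ orthonormal and $\mathbf{M}$ diagonal. $\|\cdot\|,\|\cdot\|_2$ denote spectral norm (Euclidean norm for vectors). $\mathcal{P}$ is the set of $N\times N$ permutation matrices. The set of relative perturbation matrices modulo permutation is $\mathcal{E}(\mathbf{S},\hat{\mathbf{S}})=\{\mathbf{E}:\mathbf{P}^{\mathsf{T}}\hat{\mathbf{S}}\mathbf{P}=\mathbf{S}+(\mathbf{E}\mathbf{S}+\mathbf{S}\mathbf{E})\text{ for some }\mathbf{P}\in\mathcal{P}\}$, and $d(\mathbf{S},\hat{\mathbf{S}})=\min\{\|\mathbf{E}\|:\mathbf{P}\in\mathcal{P},\ \mathbf{P}^{\mathsf{T}}\hat{\mathbf{S}}\mathbf{P}=\mathbf{S}+\mathbf{E}\mathbf{S}+\mathbf{S}\mathbf{E}\}$. For linear operators, $\|\mathbf{A}-\hat{\mathbf{A}}\|_{\mathcal{P}}=\min_{\mathbf{P}\in\mathcal{P}}\max_{\|\mathbf{x}\|=1}\|\mathbf{P}^{\mathsf{T}}(\mathbf{A}\mathbf{x})-\hat{\mathbf{A}}(\mathbf{P}^{\mathsf{T}}\mathbf{x})\|$. A filter $\mathbf{h}=\{h_k\}_{k\ge0}$ defines $\mathbf{H}(\mathbf{S})=\sum_k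 h_k\mathbf{S}^k$ and frequency response $h(\lambda)=\sum_k h_k\lambda^k$ (analytic), with $|h(\lambda)|\le1$. It is integral Lipschitz with constant $C>0$ if $|h(\lambda_2)-h(\lambda_1)|\le C\,\frac{|\lambda_2-\lambda_1|}{|\lambda_1+\lambda_2|/2}$ for all $\lambda_1,\lambda_2$. $\mathcal{O}(\varepsilon^2)$ denotes a term bounded by a constant times $\varepsilon^2$. *)

(* Defs.v *)
From HB Require Import structures.
From mathcomp Require Import all_boot all_order all_fingroup all_algebra.
From mathcomp Require Import all_classical all_reals all_analysis.
Set Implicit Arguments. Unset Strict Implicit. Unset Printing Implicit Defensive.
Import Order.TTheory GRing.Theory Num.Theory numFieldNormedType.Exports.
Local Open Scope classical_set_scope.
Local Open Scope ring_scope.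

Section Defs.
Variable R : realType.

Definition enorm (N : nat) (x : 'cV[R]_N) : R := Num.sqrt (\sum_i (x i 0) ^+ 2).

Definition opnorm (N : nat) (A : 'M[R]_N) : R :=
  sup [set enorm (A *m x) | x in [set x : 'cV[R]_N | enorm x = 1]].

Definition permmx_set (N : nat) : set 'M[R]_N :=
  [set P | exists s : 'S_N, P = perm_mx s].

Definition relpert (N : nat) (S Shat : 'M[R]_N) : set 'M[R]_N :=
  [set E | exists2 P, @permmx_set N P & P^T *m Shat *m P = S + (E *m S + S *m E)].

Definition dist_rel (N : nat) (S Shat : 'M[R]_N) : R :=
  inf [set opnorm E | E in relpert S Shat].

Definition perm_dist_norm (N : nat) (A Ahat : 'M[R]_N) : R :=
  inf [set opnorm (P^T *m A - Ahat *m P^T) | P in @permmx_set N].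

Definition freq_resp (h : nat -> R) (l : R) : R :=
  limn (fun n => \sum_(k < n) h k * l ^+ k).

Definition seqlim (u : nat -> R) : R := limn u.

Definition graph_filter (N : nat) (h : nat -> R) (S : 'M[R]_N) : 'M[R]_N :=
  \matrix_(i, j) seqlim (fun n => (\sum_(k < n) h k *: S ^+ k) i j).

Definition analytic_filter (h : nat -> R) : Prop :=
  forall l : R, cvgn (fun n => \sum_(k < n) h k * l ^+ k).

(* integral Lipschitz, denominator cleared:
   |h(l2) - h(l1)| <= C |l2 - l1| / (|l1 + l2| / 2) *)
Definition integral_lipschitz (h : nat -> R) (C : R) : Prop :=
  forall l1 l2 : R,
    `|freq_resp h l2 - freq_resp h l1| * (`|l1 + l2| / 2) <= C * `|l2 - l1|.

Definition misalign (N : nat) (U V : 'M[R]_N) : R := (opnorm (U - V) + 1) ^+ 2 - 1.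

End Defs.

(* Main.v *)
Require Import Defs.
From HB Require Import structures.
From mathcomp Require Import all_boot all_order all_fingroup all_algebra.
From mathcomp Require Import all_classical all_reals all_analysis.
From mathcomp Require Import complex.
From mathcomp Require Import ring lra.
Set Implicit Arguments. Unset Strict Implicit. Unset Printing Implicit Defensive.
Import Order.TTheory GRing.Theory Num.Theory numFieldNormedType.Exports.
Local Open Scope classical_set_scope.
Local Open Scope ring_scope.
Section Spec.
Variable R : realType.
Local Notation toC := (real_complex R).

Lemma ReD (x y : R[i]) : complex.Re (x + y) = complex.Re x + complex.Re y.
Proof. by case: x => a b; case: y. Qed.

Lemma Re_sum I (r : seq I) (P : pred I) (F : I -> R[i]) :
  complex.Re (\sum_(i <- r | P i) F i) = \sum_(i <- r | P i) complex.Re (F i).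
Proof. by apply: (big_morph _ ReD). Qed.

Lemma ReMr (z : R[i]) (r : R) : complex.Re (z * toC r) = complex.Re z * r.
Proof. case: z => a b /=. by rewrite mulr0 subr0. Qed.

Lemma Re_toC (r : R) : complex.Re (toC r) = r.
Proof. by []. Qed.

Lemma toCM (a b : R) : toC (a * b) = toC a * toC b.
Proof. by rewrite rmorphM. Qed.

Lemma Re_conjM (z : R[i]) : 0 <= complex.Re (Num.conj z * z).
Proof.
case: z => a b /=. rewrite mulNr opprK. by rewrite addr_ge0 // -expr2 sqr_ge0.
Qed.

Lemma map_mxX' n (f : {rmorphism R -> R[i]}) (A : 'M[R]_n) k :
  map_mx f (A ^+ k) = (map_mx f A) ^+ k.
Proof.
elim: k => [|k IH]; first by rewrite !expr0 map_mx1.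
by rewrite !exprS -!mulmxE map_mxM IH.
Qed.

End Spec.
Section Spec2.
Local Open Scope sesquilinear_scope.
Variable R : realType.
Local Notation toC := (real_complex R).

Lemma sym_spectral n (B : 'M[R]_n) : B^T = B ->
  exists (d : 'I_n -> R) (a : 'I_n -> 'M[R]_n),
    (forall k, B ^+ k = \sum_l (d l ^+ k) *: a l) /\
    (forall l (x : 'cV[R]_n), 0 <= (x^T *m a l *m x) 0 0).
Proof.
move=> Bsym.
pose A := map_mx toC B.
have Aherm : A \is hermsymmx.
  have H := @realsym_hermsym _ _ A; apply: H.
    apply/is_hermitianmxP; rewrite expr0 scale1r.
    apply/matrixP => i j; rewrite !mxE /=.
    by have := congr1 (fun M : 'M[R]_n => M i j) Bsym; rewrite mxE => <-.
  apply/mxOverP => i j; rewrite mxE. by apply/complex_realP; exists (B i j).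
have Anorm := hermitian_normalmx Aherm.
have Dreal := hermitian_spectral_diag_real Aherm.
set P := spectralmx A. set D := spectral_diag A.
have Pu : P \is unitarymx := spectral_unitarymx A.
have AE : A = P^t* *m diag_mx D *m P.
  have /orthomx_spectralP := Anorm.
  by rewrite invmx_unitary.
have PP : P *m P^t* = 1%:M by apply/unitarymxP.
have AkE : forall k, A ^+ k = P^t* *m diag_mx (\row_j (D 0 j ^+ k)) *m P.
  elim=> [|k IH].
    rewrite expr0.
    have -> : diag_mx (\row_j (D 0 j ^+ 0)) = 1%:M.
      by apply/matrixP => i j; rewrite !mxE expr0.
    by rewrite mulmx1 mulmx1C.
  rewrite exprS -mulmxE IH AE.
  rewrite !mulmxA -[_ *m P *m P^t*]mulmxA PP mulmx1.
  rewrite -[_ *m diag_mx D *m _]mulmxA mulmx_diag -!mulmxA; congr (_ *m (diag_mx _ *m _)).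
  by apply/rowP => j; rewrite !mxE exprS.
pose d l := complex.Re (D 0 l).
have DE : forall l, D 0 l = toC (d l).
  move=> l; have H1 : D 0 l \is Num.real by exact: (mxOverP Dreal 0 l).
  by rewrite /d RRe_real.
exists d, (fun l => \matrix_(i, j) complex.Re (Num.conj (P l i) * P l j)).
split.
  move=> k; apply/matrixP => i j.
  have : toC ((B ^+ k) i j) = (A ^+ k) i j by rewrite /A -map_mxX' mxE.
  move/(congr1 (@complex.Re R)); rewrite Re_toC => ->.
  rewrite AkE mul_mx_diag summxE mxE Re_sum; apply: eq_bigr => l _.
  rewrite !mxE DE -rmorphXn /= -mulrA [_ * P l j]mulrC mulrA ReMr mulrC.
  by [].
move=> l x.
pose z := \sum_j toC (x j 0) * P l j.
suff -> : (x^T *m (\matrix_(i, j) complex.Re (Num.conj (P l i) * P l j)) *m x) 0 0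
   = complex.Re (Num.conj z * z) by apply: Re_conjM.
rewrite /z rmorph_sum /= mulr_suml Re_sum mxE.
rewrite [RHS](eq_bigr (fun i => \sum_j (x i 0 * complex.Re (Num.conj (P l i) * P l j) * x j 0))); last first.
  move=> i _; rewrite mulr_sumr Re_sum; apply: eq_bigr => j _.
  rewrite rmorphM /= (_ : Num.conj (toC (x i 0)) = toC (x i 0)); last exact: conjc_real.
  have -> : toC (x i 0) * (P l i)^* * (toC (x j 0) * P l j)
     = (Num.conj (P l i) * P l j) * toC (x i 0 * x j 0).
    by rewrite rmorphM /=; ring.
  rewrite ReMr. ring.
rewrite exchange_big /=; apply: eq_bigr => j _.
rewrite !mxE mulr_suml; apply: eq_bigr => i _.
by rewrite !mxE.
Qed.
End Spec2.
Section Norms.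
Variable R : realType.
Implicit Types (n : nat).

Definition sq n (x : 'cV[R]_n) : R := \sum_i x i 0 ^+ 2.

Lemma sq_ge0 n (x : 'cV[R]_n) : 0 <= sq x.
Proof. by apply: sumr_ge0 => i _; apply: sqr_ge0. Qed.

Lemma enormE n (x : 'cV[R]_n) : enorm x = Num.sqrt (sq x).
Proof. by []. Qed.

Lemma enorm_ge0 n (x : 'cV[R]_n) : 0 <= enorm x.
Proof. exact: sqrtr_ge0. Qed.

Lemma sqr_enorm n (x : 'cV[R]_n) : enorm x ^+ 2 = sq x.
Proof. by rewrite enormE sqr_sqrtr // sq_ge0. Qed.

Lemma enorm_leP n (x : 'cV[R]_n) c : 0 <= c -> (enorm x <= c) = (sq x <= c ^+ 2).
Proof.
move=> c0; rewrite enormE -[X in _ <= X]ger0_norm // -sqrtr_sqr ler_sqrt //.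
exact: sqr_ge0.
Qed.

Lemma CS n (a b : 'I_n -> R) :
  (\sum_i a i * b i) ^+ 2 <= (\sum_i a i ^+ 2) * (\sum_i b i ^+ 2).
Proof.
set A := \sum_i a i ^+ 2; set B := \sum_i b i ^+ 2; set P := \sum_i a i * b i.
have A0 : 0 <= A by apply: sumr_ge0 => i _; apply: sqr_ge0.
have [Az|Apos] := eqVneq A 0.
  have a0 : forall i, a i = 0.
    move=> i; apply/eqP; rewrite -sqrf_eq0; apply/eqP.
    by move: Az => /psumr_eq0P -> // j _; apply: sqr_ge0.
  rewrite /P (eq_bigr (fun _ => 0)) ?big1 // ?expr0n /= ?mulr_ge0 //.
    by apply: sumr_ge0 => i _; apply: sqr_ge0.
  by move=> i _; rewrite a0 mul0r.
have Ap : 0 < A by rewrite lt_def Apos A0.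
have H : 0 <= \sum_i (A * b i - P * a i) ^+ 2 by apply: sumr_ge0 => i _; apply: sqr_ge0.
have E : \sum_i (A * b i - P * a i) ^+ 2 = A * (A * B - P ^+ 2).
  rewrite (eq_bigr (fun i => A ^+ 2 * b i ^+ 2 - (2 * A * P) * (a i * b i) + P ^+ 2 * a i ^+ 2)); last by move=> i _; ring.
  rewrite big_split /= big_split /= sumrN -!mulr_sumr -/A -/B -/P.
  ring.
rewrite E in H.
rewrite -subr_ge0.
by rewrite pmulr_rge0 in H.
Qed.

Lemma sq_mulmx n (A : 'M[R]_n) (x : 'cV[R]_n) :
  sq (A *m x) <= (\sum_i \sum_j A i j ^+ 2) * sq x.
Proof.
rewrite /sq mulr_suml; apply: ler_sum => i _.
rewrite mxE; exact: CS.
Qed.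

End Norms.
Section OpNorm.
Variable R : realType.
Variable n : nat.
Implicit Types (A B Q : 'M[R]_n) (x y : 'cV[R]_n).

Definition Fro A : R := \sum_i \sum_j A i j ^+ 2.

Lemma Fro_ge0 A : 0 <= Fro A.
Proof. by apply: sumr_ge0 => i _; apply: sumr_ge0 => j _; apply: sqr_ge0. Qed.

Lemma enorm1_sq x : enorm x = 1 -> sq x = 1.
Proof. by move=> e1; rewrite -sqr_enorm e1 expr1n. Qed.

Lemma opnorm_has_ub A :
  has_ubound [set enorm (A *m x) | x in [set x : 'cV[R]_n | enorm x = 1]].
Proof.
exists (Num.sqrt (Fro A)) => _ [x /= x1 <-].
rewrite enorm_leP ?sqrtr_ge0 // sqr_sqrtr ?Fro_ge0 //.
by have := sq_mulmx A x; rewrite (enorm1_sq x1) mulr1.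
Qed.

Lemma opnorm_ge0 A : 0 <= opnorm A.
Proof.
rewrite /opnorm.
have [[x x1]|nex] := pselect (exists x : 'cV[R]_n, enorm x = 1).
  apply: le_trans (enorm_ge0 (A *m x)) _.
  by apply: ub_le_sup; [exact: opnorm_has_ub | exists x].
suff -> : [set enorm (A *m x) | x in [set x : 'cV[R]_n | enorm x = 1]] = set0 by rewrite sup0.
by apply/seteqP; split => // _ [x /= x1 _]; apply: nex; exists x.
Qed.

Lemma enorm_scale x (k : R) : enorm (k *: x) = `|k| * enorm x.
Proof.
rewrite !enormE -sqrtr_sqr -sqrtrM ?sqr_ge0 //; congr Num.sqrt.
by rewrite /sq mulr_sumr; apply: eq_bigr => i _; rewrite mxE exprMn.
Qed.

Lemma sq0 x : sq x = 0 -> x = 0.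
Proof.
move=> /psumr_eq0P H; apply/matrixP => i j; rewrite ord1 mxE.
by apply/eqP; rewrite -sqrf_eq0 H // => k _; apply: sqr_ge0.
Qed.

Lemma opnorm_mulv A x : enorm (A *m x) <= opnorm A * enorm x.
Proof.
have [x0|xn0] := eqVneq (enorm x) 0.
  have : x = 0 by apply: sq0; rewrite -sqr_enorm x0 expr0n.
  move=> xz; rewrite x0 mulr0 xz mulmx0 /enorm big1 ?sqrtr0 // => i _; rewrite mxE expr0n //.
have xp : 0 < enorm x by rewrite lt_def xn0 enorm_ge0.
pose u := (enorm x)^-1 *: x.
have u1 : enorm u = 1 by rewrite enorm_scale ger0_norm ?invr_ge0 ?enorm_ge0 // mulVf.
have : enorm (A *m u) <= opnorm A.
  by apply: ub_le_sup; [exact: opnorm_has_ub | exists u].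
rewrite /u -scalemxAr enorm_scale ger0_norm ?invr_ge0 ?enorm_ge0 //.
by rewrite ler_pdivrMl // mulrC.
Qed.

Lemma opnorm_le A c : 0 <= c -> (forall x, enorm (A *m x) <= c * enorm x) -> opnorm A <= c.
Proof.
move=> c0 H; rewrite /opnorm.
have [[x x1]|nex] := pselect (exists x : 'cV[R]_n, enorm x = 1).
  apply: ge_sup; first by exists (enorm (A *m x)), x.
  by move=> _ [y /= y1 <-]; have := H y; rewrite y1 mulr1.
suff -> : [set enorm (A *m x) | x in [set x : 'cV[R]_n | enorm x = 1]] = set0 by rewrite sup0.
by apply/seteqP; split => // _ [x /= x1 _]; apply: nex; exists x.
Qed.

Lemma opnorm_leP A c : 0 <= c -> (forall x, sq (A *m x) <= c ^+ 2 * sq x) -> opnorm A <= c.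
Proof.
move=> c0 H; apply: opnorm_le => // x.
rewrite enorm_leP ?mulr_ge0 ?enorm_ge0 // exprMn sqr_enorm; exact: H.
Qed.

Lemma sq_opnorm A x : sq (A *m x) <= opnorm A ^+ 2 * sq x.
Proof.
rewrite -!sqr_enorm -exprMn ler_sqr ?nnegrE ?mulr_ge0 ?enorm_ge0 ?opnorm_ge0 //.
exact: opnorm_mulv.
Qed.

Lemma opnorm_mul A B : opnorm (A *m B) <= opnorm A * opnorm B.
Proof.
apply: opnorm_le; first by rewrite mulr_ge0 ?opnorm_ge0.
move=> x; rewrite -mulmxA; apply: le_trans (opnorm_mulv _ _) _.
by rewrite -mulrA; apply: ler_wpM2l; rewrite ?opnorm_ge0 // opnorm_mulv.
Qed.

Lemma enorm_add x y : enorm (x + y) <= enorm x + enorm y.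
Proof.
rewrite enorm_leP ?addr_ge0 ?enorm_ge0 //.
have -> : sq (x + y) = sq x + 2 * \sum_i x i 0 * y i 0 + sq y.
  rewrite /sq (eq_bigr (fun i => x i 0 ^+ 2 + 2 * (x i 0 * y i 0) + y i 0 ^+ 2)); last by move=> i _; rewrite mxE; ring.
  by rewrite !big_split /= mulr_sumr.
rewrite sqrrD !sqr_enorm lerD2r lerD2l.
suff : \sum_i x i 0 * y i 0 <= enorm x * enorm y by rewrite mulr2n; lra.
have := CS (fun i => x i 0) (fun i => y i 0); rewrite -/(sq x) -/(sq y) -!sqr_enorm -exprMn.
move=> H; apply: le_trans (ler_norm _) _.
rewrite -(ger0_norm (mulr_ge0 (enorm_ge0 x) (enorm_ge0 y))).
by rewrite -ler_sqr ?nnegrE ?normr_ge0 // !real_normK ?num_real.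
Qed.

Lemma opnorm_add A B : opnorm (A + B) <= opnorm A + opnorm B.
Proof.
apply: opnorm_le; first by rewrite addr_ge0 ?opnorm_ge0.
move=> x; rewrite mulmxDl mulrDl; apply: le_trans (enorm_add _ _) _.
by apply: lerD; apply: opnorm_mulv.
Qed.

Lemma opnorm_scale (k : R) A : opnorm (k *: A) <= `|k| * opnorm A.
Proof.
apply: opnorm_le; first by rewrite mulr_ge0 ?opnorm_ge0.
by move=> x; rewrite -scalemxAl enorm_scale -mulrA; apply: ler_wpM2l; rewrite ?opnorm_mulv.
Qed.

Lemma opnorm_opp A : opnorm (- A) <= opnorm A.
Proof. by rewrite -scaleN1r; apply: le_trans (opnorm_scale _ _) _; rewrite normrN normr1 mul1r. Qed.

Lemma opnorm_sum I (r : seq I) (P : pred I) (F : I -> 'M[R]_n) :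
  opnorm (\sum_(i <- r | P i) F i) <= \sum_(i <- r | P i) opnorm (F i).
Proof.
elim/big_rec2: _ => [|i y M _ IH].
  apply: opnorm_leP => // x; rewrite mul0mx expr0n mul0r /sq big1 // => i _; rewrite mxE expr0n //.
by apply: le_trans (opnorm_add _ _) _; rewrite lerD2l.
Qed.

Lemma sq_orth Q x : Q^T *m Q = 1%:M -> sq (Q *m x) = sq x.
Proof.
move=> QQ.
have sqE : forall y : 'cV[R]_n, sq y = (y^T *m y) 0 0.
  by move=> y; rewrite /sq mxE; apply: eq_bigr => i _; rewrite mxE expr2.
by rewrite !sqE trmx_mul -mulmxA (mulmxA Q^T) QQ mul1mx.
Qed.

Lemma opnorm_orth Q : Q^T *m Q = 1%:M -> opnorm Q <= 1.
Proof. by move=> QQ; apply: opnorm_leP => // x; rewrite sq_orth // expr1n mul1r. Qed.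

Lemma opnorm1 : opnorm (1%:M : 'M[R]_n) <= 1.
Proof. by apply: opnorm_orth; rewrite trmx1 mul1mx. Qed.

Lemma opnorm_exp A k : opnorm (A ^+ k) <= opnorm A ^+ k.
Proof.
elim: k => [|k IH]; first by rewrite !expr0; exact: opnorm1.
rewrite !exprS -mulmxE; apply: le_trans (opnorm_mul _ _) _.
by apply: ler_wpM2l; rewrite ?opnorm_ge0.
Qed.

Lemma opnorm_conj Q A : Q^T *m Q = 1%:M -> Q *m Q^T = 1%:M -> opnorm (Q *m A *m Q^T) <= opnorm A.
Proof.
move=> Q1 Q2.
apply: le_trans (opnorm_mul _ _) _.
have QT : opnorm Q^T <= 1 by apply: opnorm_orth; rewrite trmxK.
apply: le_trans (ler_wpM2l _ QT) _; first by apply: opnorm_ge0.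
rewrite mulr1; apply: le_trans (opnorm_mul _ _) _.
by rewrite -[X in _ <= X]mul1r; apply: ler_wpM2r; rewrite ?opnorm_ge0 ?opnorm_orth.
Qed.

Lemma sq_delta (j : 'I_n) : sq (delta_mx j 0 : 'cV[R]_n) = 1.
Proof.
rewrite /sq (bigD1 j) //= big1 ?addr0 ?mxE ?eqxx ?expr1n //.
by move=> i ij; rewrite mxE (negPf ij) /= expr0n.
Qed.

Lemma entry_le A i j : `|A i j| <= opnorm A.
Proof.
have := sq_opnorm A (delta_mx j 0); rewrite sq_delta mulr1 -colE.
move=> H; rewrite -ler_sqr ?nnegrE ?normr_ge0 ?opnorm_ge0 // real_normK ?num_real //.
apply: le_trans H; rewrite /sq (bigD1 i) //= {1}mxE -[X in X <= _]addr0 lerD2l.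
by apply: sumr_ge0 => k _; apply: sqr_ge0.
Qed.

Lemma diag_le (v : 'rV[R]_n) c : 0 <= c -> (forall i, `|v 0 i| <= c) -> opnorm (diag_mx v) <= c.
Proof.
move=> c0 H; apply: opnorm_leP => // x.
rewrite /sq mulr_sumr; apply: ler_sum => i _.
rewrite mul_diag_mx mxE exprMn; apply: ler_wpM2r; rewrite ?sqr_ge0 //.
by rewrite -real_normK ?num_real // ler_sqr ?nnegrE ?normr_ge0.
Qed.

Lemma Fro_le A : Fro A <= n%:R * opnorm A ^+ 2.
Proof.
rewrite /Fro exchange_big /=.
apply: (@le_trans _ _ (\sum_(j < n) opnorm A ^+ 2)); last by rewrite sumr_const card_ord mulr_natl.
apply: ler_sum => j _.
have := sq_opnorm A (delta_mx j 0); rewrite sq_delta mulr1 -colE.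
by rewrite /sq (eq_bigr (fun i => A i j ^+ 2)) // => i _; rewrite !mxE.
Qed.

Lemma schur_le (G Y : 'M[R]_n) g : 0 <= g -> (forall i j, `|G i j| <= g) ->
  opnorm (\matrix_(i, j) (G i j * Y i j)) <= g * Num.sqrt n%:R * opnorm Y.
Proof.
move=> g0 Hg; apply: opnorm_leP; first by rewrite !mulr_ge0 ?sqrtr_ge0 ?opnorm_ge0.
move=> x; apply: le_trans (sq_mulmx _ _) _; apply: ler_wpM2r; rewrite ?sq_ge0 //.
rewrite !exprMn sqr_sqrtr ?ler0n //.
apply: (@le_trans _ _ (g ^+ 2 * Fro Y)); last by rewrite -mulrA; apply: ler_wpM2l; rewrite ?sqr_ge0 ?Fro_le.
rewrite /Fro mulr_sumr; apply: ler_sum => i _; rewrite mulr_sumr; apply: ler_sum => j _.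
rewrite mxE exprMn; apply: ler_wpM2r; rewrite ?sqr_ge0 // -real_normK ?num_real //.
by rewrite ler_sqr ?nnegrE ?normr_ge0.
Qed.

End OpNorm.
Section Anal.
Variable R : realType.
Implicit Types (h : nat -> R) (a b c t : R).

Lemma cvg_sumR (J : Type) (r : seq J) (P : pred J) (f : J -> nat -> R) (l : J -> R) :
  (forall j, P j -> (f j) @ \oo --> l j) ->
  (fun n => \sum_(j <- r | P j) f j n) @ \oo --> \sum_(j <- r | P j) l j.
Proof.
move=> H; elim: r => [|j r IH].
  rewrite big_nil; under eq_fun do rewrite big_nil; exact: cvg_cst.
rewrite big_cons; under eq_fun do rewrite big_cons.
case: (boolP (P j)) => Pj; last by [].
exact: cvgD (H j Pj) IH.
Qed.

Definition psum h n l := \sum_(k < n) h k * l ^+ k.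

Lemma psum_cvg h l : analytic_filter h -> (fun n => psum h n l) @ \oo --> freq_resp h l.
Proof. move=> an; rewrite /freq_resp; exact: (an l). Qed.

Lemma geom_le n : \sum_(k < n) (2^-1 : R) ^+ k <= 2.
Proof.
suff E : forall n, \sum_(k < n) (2^-1 : R) ^+ k + 2 * (2^-1) ^+ n = 2.
  have := E n; have : 0 <= 2 * (2^-1 : R) ^+ n by rewrite mulr_ge0 // exprn_ge0.
  lra.
elim=> [|m IH]; first by rewrite big_ord0 expr0 add0r mulr1.
rewrite big_ord_recr /= exprSr.
rewrite (_ : 2 * ((2^-1 : R) ^+ m * 2^-1) = (2^-1) ^+ m); last by field.
move: IH; set y := (2^-1 : R) ^+ m; lra.
Qed.

Lemma coef_bound h c : analytic_filter h -> 0 <= c ->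
  exists T, 0 <= T /\ forall n, \sum_(k < n) `|h k| * (k%:R ^+ 2 * c ^+ k) <= T.
Proof.
move=> an c0.
pose u k := h k * (8 * c) ^+ k.
have su : cvgn (series u).
  have -> : series u = (fun n => \sum_(k < n) h k * (8 * c) ^+ k).
    by apply: funext => n; rewrite /series /= big_mkord.
  exact: an.
have u0 := cvg_series_cvg_0 su.
have /cvgrPdist_le /(_ 1 ltr01) [N0 _ HN] := u0.
pose M := 1 + \sum_(k < N0) `|u k|.
have M0 : 0 <= M by rewrite addr_ge0 // sumr_ge0.
have Mb : forall k, `|u k| <= M.
  move=> k; case: (leqP N0 k) => kN.
    have := HN k kN; rewrite /= sub0r normrN => H.
    by apply: le_trans H _; rewrite lerDl sumr_ge0.
  apply: le_trans (_ : \sum_(k < N0) `|u k| <= M); last by rewrite lerDr.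
  by rewrite (bigD1 (Ordinal kN)) //= lerDl sumr_ge0.
exists (2 * M); split; first by rewrite mulr_ge0.
move=> n.
apply: (@le_trans _ _ (\sum_(k < n) M * (2^-1) ^+ k)); last first.
  by rewrite -mulr_sumr mulrC; apply: ler_wpM2r => //; exact: geom_le.
apply: ler_sum => k _.
have k4 : (k%:R : R) ^+ 2 <= 4 ^+ k.
  have : (k < 2 ^ k)%N by apply: ltn_expl.
  move=> /ltnW; rewrite -(ler_nat R) natrX => kl.
  have -> : (4 : R) ^+ k = (2 ^+ k) ^+ 2 by rewrite -exprM mulnC exprM; congr (_ ^+ _); rewrite expr2; ring.
  by rewrite ler_sqr ?nnegrE ?exprn_ge0 ?ler0n.
have := Mb k; rewrite /u normrM (ger0_norm (exprn_ge0 _ _)); last by rewrite mulr_ge0.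
move=> Hk.
apply: (@le_trans _ _ (`|h k| * (4 ^+ k * c ^+ k))).
  apply: ler_wpM2l => //; apply: ler_wpM2r => //; exact: exprn_ge0.
have -> : `|h k| * (4 ^+ k * c ^+ k) = `|h k| * (8 * c) ^+ k * (2^-1) ^+ k.
  by rewrite -mulrA -!exprMn (_ : 8 * c * 2^-1 = 4 * c) //; field.
by apply: ler_wpM2r => //; exact: exprn_ge0.
Qed.

Fixpoint DD (k : nat) (a b : R) : R := if k is k'.+1 then DD k' a b * b + a ^+ k' else 0.

Lemma DD_diff k a b : (a - b) * DD k a b = a ^+ k - b ^+ k.
Proof.
elim: k => [|k IH] /=; first by rewrite mulr0 !expr0 subrr.
by rewrite mulrDr mulrA IH !exprS; ring.
Qed.

Lemma DD_bound k a b c : `|a| <= c -> `|b| <= c -> 1 <= c -> `|DD k a b| <= k%:R ^+ 2 * c ^+ k.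
Proof.
move=> ha hb c1; have c0 : 0 <= c by apply: le_trans c1.
elim: k => [|k IH] /=; first by rewrite normr0 expr0 mulr1 sqr_ge0.
apply: le_trans (ler_normD _ _) _; rewrite normrM normrX.
have e1 : `|DD k a b| * `|b| <= k%:R ^+ 2 * c ^+ k * c.
  by apply: ler_pM => //; apply: normr_ge0.
have e2 : `|a| ^+ k <= c ^+ k by rewrite lerXn2r ?nnegrE.
have e3 : c ^+ k <= c * c ^+ k by rewrite ler_peMl ?exprn_ge0.
have ck : 0 <= c ^+ k by apply: exprn_ge0.
rewrite -natr1 [c ^+ k.+1]exprS.
have kk : 0 <= (k%:R : R) * (c * c ^+ k) by rewrite !mulr_ge0 ?ler0n.
nra.
Qed.

Lemma pow_pert k a t c : `|a| + `|t| <= c -> 1 <= c ->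
  `|(a + t) ^+ k - a ^+ k| <= k%:R * c ^+ k * `|t|.
Proof.
move=> hc c1; have c0 : 0 <= c by apply: le_trans c1.
have ha : `|a| <= c by apply: le_trans hc; rewrite lerDl.
have hat : `|a + t| <= c by apply: le_trans (ler_normD _ _) hc.
elim: k => [|k IH]; first by rewrite !expr0 subrr normr0 !mul0r.
have -> : (a + t) ^+ k.+1 - a ^+ k.+1 = ((a + t) ^+ k - a ^+ k) * (a + t) + a ^+ k * t.
  by rewrite !exprS; ring.
apply: le_trans (ler_normD _ _) _; rewrite !normrM normrX.
have e1 : `|(a + t) ^+ k - a ^+ k| * `|a + t| <= k%:R * c ^+ k * `|t| * c.
  by apply: ler_pM => //; apply: normr_ge0.
have e2 : `|a| ^+ k * `|t| <= c ^+ k * `|t|.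
  by apply: ler_wpM2r; [apply: normr_ge0 | rewrite lerXn2r ?nnegrE].
have e3 : c ^+ k * `|t| <= c * c ^+ k * `|t|.
  by apply: ler_wpM2r; [apply: normr_ge0 | rewrite ler_peMl ?exprn_ge0].
rewrite -natr1 [c ^+ k.+1]exprS.
have tt : 0 <= `|t| by apply: normr_ge0.
have ck : 0 <= c ^+ k by apply: exprn_ge0.
nra.
Qed.

Lemma DD_pert k a t c : `|a| + `|t| <= c -> 1 <= c ->
  `|DD k (a + t) a - DD k a a| <= k%:R ^+ 2 * c ^+ k * `|t|.
Proof.
move=> hc c1; have c0 : 0 <= c by apply: le_trans c1.
have ha : `|a| <= c by apply: le_trans hc; rewrite lerDl.
elim: k => [|k IH] /=; first by rewrite subrr normr0 expr0 mulr1 mulr_ge0 ?sqr_ge0 ?normr_ge0.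
have -> : DD k (a + t) a * a + (a + t) ^+ k - (DD k a a * a + a ^+ k)
   = (DD k (a + t) a - DD k a a) * a + ((a + t) ^+ k - a ^+ k) by ring.
apply: le_trans (ler_normD _ _) _; rewrite normrM.
have e1 : `|DD k (a + t) a - DD k a a| * `|a| <= k%:R ^+ 2 * c ^+ k * `|t| * c.
  by apply: ler_pM => //; apply: normr_ge0.
have e2 := pow_pert k hc c1.
have e3 : c ^+ k * `|t| <= c * c ^+ k * `|t|.
  by apply: ler_wpM2r; [apply: normr_ge0 | rewrite ler_peMl ?exprn_ge0].
have e4 : k%:R * c ^+ k * `|t| <= k%:R * (c * c ^+ k) * `|t|.
  by apply: ler_wpM2r; [apply: normr_ge0 | apply: ler_wpM2l; rewrite ?ler0n // ler_peMl ?exprn_ge0].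
rewrite -natr1 [c ^+ k.+1]exprS.
have tt : 0 <= `|t| by apply: normr_ge0.
have ck : 0 <= c ^+ k by apply: exprn_ge0.
have kk : 0 <= (k%:R : R) * (c * c ^+ k) * `|t| by rewrite !mulr_ge0 ?ler0n.
nra.
Qed.

End Anal.
Section Anal2.
Variable R : realType.
Implicit Types (h : nat -> R) (a b c t : R).

Definition Gs h n a b := \sum_(k < n) h k * DD k a b.
Definition gl h a b := limn (fun n => Gs h n a b).

Lemma Gs_cvg h a b : analytic_filter h -> cvgn (fun n => Gs h n a b).
Proof.
move=> an.
pose c := `|a| + `|b| + 1.
have na := normr_ge0 a; have nb := normr_ge0 b.
have ca : `|a| <= c by rewrite /c; lra.
have cb : `|b| <= c by rewrite /c; lra.
have c1 : 1 <= c by rewrite /c; lra.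
have [T [T0 HT]] := coef_bound an (le_trans ler01 c1).
have -> : (fun n => Gs h n a b) = series (fun k => h k * DD k a b).
  by apply: funext => n; rewrite /series /Gs /= big_mkord.
apply: normed_cvg; apply: nondecreasing_is_cvgn.
  by apply: nondecreasing_series => k _ _; apply: normr_ge0.
exists T => _ [n _ <-]; rewrite /normed_series_of /= seriesEord /=.
apply: le_trans (HT n); apply: ler_sum => k _.
by rewrite normrM; apply: ler_wpM2l => //; apply: DD_bound.
Qed.

Lemma Gs_ne h n a b : a != b -> Gs h n a b = (psum h n a - psum h n b) / (a - b).
Proof.
move=> ab; have ab0 : a - b != 0 by rewrite subr_eq0.
apply: (mulfI ab0); rewrite [RHS]mulrC divfK // /Gs /psum mulr_sumr -sumrB.
apply: eq_bigr => k _; rewrite mulrCA DD_diff; ring.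
Qed.

Lemma gl_ne h a b : analytic_filter h -> a != b ->
  gl h a b = (freq_resp h a - freq_resp h b) / (a - b).
Proof.
move=> an ab; rewrite /gl.
have -> : (fun n => Gs h n a b) = (fun n => (psum h n a - psum h n b) / (a - b)).
  by apply: funext => n; rewrite Gs_ne.
apply: cvg_lim => //.
apply: cvgMl; apply: cvgB; exact: psum_cvg.
Qed.

Lemma lim_dist (u v : nat -> R) e : cvgn u -> cvgn v -> (forall n, `|u n - v n| <= e) ->
  `|limn u - limn v| <= e.
Proof.
move=> hu hv H.
have Hc : (fun n => `|u n - v n|) @ \oo --> `|limn u - limn v|.
  by apply: cvg_norm; apply: cvgB.
rewrite -(cvg_lim _ Hc) //; apply: limr_le; first by apply/cvg_ex; eexists; exact: Hc.
by apply: nearW.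
Qed.

End Anal2.
Section Anal3.
Variable R : realType.
Implicit Types (h : nat -> R) (a b c t : R).

Lemma gl_bound h C a b : analytic_filter h -> integral_lipschitz h C -> 0 <= C ->
  `|gl h a b| * `|a + b| <= 2 * C.
Proof.
move=> an IL C0.
have [ab|ab] := eqVneq a b; last first.
  rewrite gl_ne // normrM normfV.
  have abp : 0 < `|a - b| by rewrite normr_gt0 subr_eq0.
  have := IL b a; rewrite [b + a]addrC => H.
  rewrite mulrAC ler_pdivrMr //.
  move: H.
  set X := `|_ - _|; set s := `|a + b|; set d := `|a - b|.
  lra.
subst b.
pose c := `|a| + 1.
have c1 : 1 <= c by rewrite /c lerDr.
have [T [T0 HT]] := coef_bound an (le_trans ler01 c1).
set g := gl h a a.
apply/ler_addgt0Pr => e e0.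
pose W := `|g| + T + T * `|a + a|.
have W0 : 0 <= W by rewrite /W !addr_ge0 ?mulr_ge0.
pose t := Order.min 1 (e / (W + 1)).
have t0 : 0 < t by rewrite /t lt_min ltr01 divr_gt0 // ltr_wpDl.
have t1 : t <= 1 by rewrite /t ge_min lexx.
have tW : t * W <= e.
  have : t <= e / (W + 1) by rewrite /t ge_min lexx orbT.
  rewrite ler_pdivlMr ?ltr_wpDl // => H; apply: le_trans H.
  by apply: ler_wpM2l; [exact: ltW | rewrite lerDl].
pose q := gl h (a + t) a.
have at0 : a + t != a by rewrite -subr_eq0 addrAC subrr add0r gt_eqF.
have H1 : `|q| * `|a + a + t| <= 2 * C.
  have := IL a (a + t).
  rewrite /q gl_ne // (_ : a + t - a = t); last by rewrite addrAC subrr add0r.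
  rewrite (gtr0_norm t0) normrM normfV (gtr0_norm t0) addrA => H.
  have -> : `|freq_resp h (a + t) - freq_resp h a| / t * `|a + a + t|
     = (`|freq_resp h (a + t) - freq_resp h a| * (`|a + a + t| / 2)) * (2 / t).
    by field; rewrite gt_eqF.
  rewrite -ler_pdivlMr ?divr_gt0 //; apply: le_trans H _.
  rewrite (_ : 2 * C / (2 / t) = C * t) //.
  by field; rewrite gt_eqF.
have H2 : `|q - g| <= T * t.
  apply: lim_dist; try exact: Gs_cvg.
  move=> n; rewrite /Gs -sumrB.
  apply: le_trans (ler_norm_sum _ _ _) _.
  apply: (@le_trans _ _ (\sum_(k < n) `|h k| * (k%:R ^+ 2 * c ^+ k) * t)); last first.
    by rewrite -mulr_suml; apply: ler_wpM2r; [exact: ltW | exact: HT].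
  apply: ler_sum => k _; rewrite -mulrBr normrM -mulrA; apply: ler_wpM2l => //.
  have := @DD_pert R k a t c; rewrite (gtr0_norm t0); apply => //.
  by rewrite /c lerD2l.
have na := normr_ge0 (a + a).
have ng := normr_ge0 g.
have nq := normr_ge0 q.
have Hg : `|g| <= `|q| + T * t.
  have := ler_normD q (g - q); rewrite (_ : q + (g - q) = g); last by ring.
  rewrite distrC; lra.
have Hq : `|q| <= `|g| + T.
  have := ler_normD g (q - g); rewrite (_ : g + (q - g) = q); last by ring.
  have : T * t <= T by rewrite -[X in _ <= X]mulr1; apply: ler_wpM2l.
  lra.
have Ha : `|a + a| <= `|a + a + t| + t.
  have := ler_normD (a + a + t) (- t); rewrite (_ : a + a + t + - t = a + a); last by ring.
  by rewrite normrN (gtr0_norm t0).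
have S1 : `|g| * `|a + a| <= (`|q| + T * t) * `|a + a| by apply: ler_wpM2r.
have S2 : `|q| * `|a + a| <= `|q| * (`|a + a + t| + t) by apply: ler_wpM2l.
have S3 : `|q| * t <= (`|g| + T) * t by apply: ler_wpM2r => //; exact: ltW.
rewrite /W in tW.
nra.
Qed.

End Anal3.
Section Filt.
Variable R : realType.
Variable n : nat.
Implicit Types (h : nat -> R) (A B : 'M[R]_n).

Definition mxcvg (M : nat -> 'M[R]_n) (L : 'M[R]_n) :=
  forall i j, (fun k => M k i j) @ \oo --> L i j.

Lemma mxcvg_add M1 M2 L1 L2 : mxcvg M1 L1 -> mxcvg M2 L2 -> mxcvg (fun k => M1 k + M2 k) (L1 + L2).
Proof.
move=> h1 h2 i j; rewrite mxE; under eq_fun do rewrite mxE.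
exact: cvgD (h1 i j) (h2 i j).
Qed.

Lemma mxcvg_opp M L : mxcvg M L -> mxcvg (fun k => - M k) (- L).
Proof.
move=> h1 i j; rewrite mxE; under eq_fun do rewrite mxE.
exact: cvgN (h1 i j).
Qed.

Lemma mxcvg_mull (P : 'M[R]_n) M L : mxcvg M L -> mxcvg (fun k => P *m M k) (P *m L).
Proof.
move=> h1 i j; rewrite mxE; under eq_fun do rewrite mxE.
apply: cvg_sumR => l _; apply: cvgMr; exact: h1.
Qed.

Lemma mxcvg_mulr (P : 'M[R]_n) M L : mxcvg M L -> mxcvg (fun k => M k *m P) (L *m P).
Proof.
move=> h1 i j; rewrite mxE; under eq_fun do rewrite mxE.
apply: cvg_sumR => l _; apply: cvgMl; exact: h1.
Qed.

Lemma sq_cvg M L (x : 'cV[R]_n) : mxcvg M L -> (fun k => sq (M k *m x)) @ \oo --> sq (L *m x).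
Proof.
move=> h1; rewrite /sq; apply: cvg_sumR => i _.
have hv : (fun k => (M k *m x) i 0) @ \oo --> (L *m x) i 0.
  rewrite mxE; under eq_fun do rewrite mxE.
  by apply: cvg_sumR => j _; apply: cvgMl; exact: h1.
rewrite expr2; under eq_fun do rewrite expr2.
by apply: cvgM; exact: hv.
Qed.

Lemma mxcvg_norm M L e : mxcvg M L -> (forall k, opnorm (M k) <= e) -> opnorm L <= e.
Proof.
move=> h1 hb; have e0 : 0 <= e by apply: le_trans (hb 0%N); apply: opnorm_ge0.
apply: opnorm_leP => // x.
have Hc := sq_cvg (x:=x) h1.
rewrite -(cvg_lim _ Hc) //; apply: limr_le; first by apply/cvg_ex; eexists; exact: Hc.
apply: nearW => k; apply: le_trans (sq_opnorm _ _) _.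
apply: ler_wpM2r; first exact: sq_ge0.
by rewrite ler_sqr ?nnegrE ?opnorm_ge0.
Qed.

Definition Hn h k (B : 'M[R]_n) := \sum_(m < k) h m *: B ^+ m.

Lemma lincomb (X : nat -> 'M[R]_n) (f : 'I_n -> nat -> R) (a : 'I_n -> 'M[R]_n) (c : nat -> R) k :
  (forall m, X m = \sum_l f l m *: a l) ->
  \sum_(m < k) c m *: X m = \sum_l (\sum_(m < k) c m * f l m) *: a l.
Proof.
move=> HX.
under eq_bigr do rewrite HX scaler_sumr.
rewrite exchange_big /=; apply: eq_bigr => l _.
by rewrite scaler_suml; apply: eq_bigr => m _; rewrite scalerA.
Qed.

Lemma trmx_exp_sym B k : B^T = B -> (B ^+ k)^T = B ^+ k.
Proof.
move=> Bs; elim: k => [|k IH]; first by rewrite expr0 trmx1.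
by rewrite [in LHS]exprS -mulmxE trmx_mul IH Bs mulmxE -exprSr.
Qed.

Lemma filt_sym h B : B^T = B -> analytic_filter h -> (forall l : R, `|freq_resp h l| <= 1) ->
  mxcvg (fun k => Hn h k B) (graph_filter h B) /\ opnorm (graph_filter h B) <= 1.
Proof.
move=> Bs an hb.
have [d [a [Bk wpos]]] := sym_spectral Bs.
have HnE : forall k, Hn h k B = \sum_l psum h k (d l) *: a l.
  by move=> k; rewrite /Hn (lincomb _ _ Bk).
pose G := \sum_l freq_resp h (d l) *: a l.
have cG : mxcvg (fun k => Hn h k B) G.
  move=> i j; under eq_fun do rewrite HnE summxE.
  rewrite /G summxE; apply: cvg_sumR => l _.
  rewrite mxE; under eq_fun do rewrite mxE.
  by apply: cvgMl; apply: psum_cvg.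
have GE : graph_filter h B = G.
  apply/matrixP => i j; rewrite mxE /seqlim.
  exact: (cvg_lim _ (cG i j)).
rewrite GE; split => //.
apply: opnorm_leP => // x; rewrite expr1n mul1r.
pose w l := (x^T *m a l *m x) 0 0.
have sqE : forall y : 'cV[R]_n, sq y = (y^T *m y) 0 0.
  by move=> y; rewrite /sq mxE; apply: eq_bigr => i _; rewrite mxE expr2.
have Hsq : forall (M : 'M[R]_n) (c : 'I_n -> R), M^T = M -> M *m M = \sum_l c l *: a l ->
    sq (M *m x) = \sum_l c l * w l.
  move=> M c Ms MM; rewrite sqE trmx_mul Ms mulmxA -(mulmxA x^T M M) MM.
  rewrite mulmx_sumr mulmx_suml summxE; apply: eq_bigr => l _.
  by rewrite -scalemxAr -scalemxAl mxE.
have sx : sq x = \sum_l w l.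
  have -> : sq x = sq (1%:M *m x) by rewrite mul1mx.
  rewrite (Hsq 1%:M (fun _ => 1)).
  - by under eq_bigr do rewrite mul1r.
  - by rewrite trmx1.
  - rewrite mul1mx; transitivity (B ^+ 0); first by rewrite expr0.
    by rewrite Bk; under eq_bigr do rewrite expr0.
have Hk : forall k, sq (Hn h k B *m x) = \sum_l (psum h k (d l)) ^+ 2 * w l.
  move=> k; apply: Hsq.
    rewrite /Hn linear_sum; apply: eq_bigr => m _.
    by rewrite linearZ /= trmx_exp_sym.
  have BH : forall m, B ^+ m *m Hn h k B = \sum_l (d l ^+ m * psum h k (d l)) *: a l.
    move=> m; rewrite /Hn mulmx_sumr.
    under eq_bigr do rewrite -scalemxAr mulmxE -exprD.
    rewrite (lincomb _ _ (fun m' => Bk (m + m')%N)); apply: eq_bigr => l _.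
    by rewrite /psum mulr_sumr; congr (_ *: _); apply: eq_bigr => m' _; rewrite exprD; ring.
  rewrite {1}/Hn mulmx_suml.
  under eq_bigr do rewrite -scalemxAl.
  rewrite (lincomb _ _ BH); apply: eq_bigr => l _.
  by rewrite expr2 /psum mulr_suml; congr (_ *: _); apply: eq_bigr => m _; ring.
have Hc := sq_cvg (x:=x) cG.
have Hc2 : (fun k => sq (Hn h k B *m x)) @ \oo --> \sum_l (freq_resp h (d l)) ^+ 2 * w l.
  under eq_fun do rewrite Hk.
  apply: cvg_sumR => l _; apply: cvgMl.
  rewrite expr2; under eq_fun do rewrite expr2.
  by apply: cvgM; apply: psum_cvg.
rewrite (cvg_unique _ Hc Hc2) // sx; apply: ler_sum => l _.
rewrite -[X in _ <= X]mul1r; apply: ler_wpM2r; first exact: wpos.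
by rewrite -real_normK ?num_real // expr_le1 ?hb.
Qed.

End Filt.
Lemma add5_perm (V : zmodType) (p q r s t : V) : p + q + (r + s) + t = p + (r + q) + (t + s).
Proof. by rewrite -!addrA; congr (p + _); rewrite addrCA [s + t]addrC. Qed.

Section Taylor.
Variable R : realType.
Variable n : nat.
Implicit Types (A Z : 'M[R]_n).

Fixpoint Lk A Z k : 'M[R]_n := if k is k'.+1 then Lk A Z k' *m A + A ^+ k' *m Z else 0.
Fixpoint Rk A Z k : 'M[R]_n := if k is k'.+1 then Rk A Z k' *m (A + Z) + Lk A Z k' *m Z else 0.

Lemma taylor_exp A Z k : (A + Z) ^+ k = A ^+ k + Lk A Z k + Rk A Z k.
Proof.
elim: k => [|k IH] /=; first by rewrite !expr0 !addr0.
rewrite exprSr -mulmxE IH !mulmxDl !mulmxDr exprSr -mulmxE.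
exact: add5_perm.
Qed.

Lemma Lk_bound A Z k c z : opnorm A <= c -> opnorm Z <= z -> 1 <= c ->
  opnorm (Lk A Z k) <= k%:R * c ^+ k * z.
Proof.
move=> hA hZ c1; have c0 : 0 <= c by apply: le_trans c1.
have z0 : 0 <= z by apply: le_trans hZ; apply: opnorm_ge0.
elim: k => [|k IH] /=.
  by rewrite mul0r mul0r; apply: opnorm_leP => // x; rewrite mul0mx expr0n mul0r /sq big1 // => i _; rewrite mxE expr0n.
apply: le_trans (opnorm_add _ _) _.
have e1 : opnorm (Lk A Z k *m A) <= k%:R * c ^+ k * z * c.
  apply: le_trans (opnorm_mul _ _) _; apply: ler_pM => //; apply: opnorm_ge0.
have e2 : opnorm (A ^+ k *m Z) <= c ^+ k * z.
  apply: le_trans (opnorm_mul _ _) _; apply: ler_pM => //; try apply: opnorm_ge0.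
  apply: le_trans (opnorm_exp _ _) _; rewrite lerXn2r ?nnegrE ?opnorm_ge0 //.
have e3 : c ^+ k * z <= c * c ^+ k * z by apply: ler_wpM2r => //; rewrite ler_peMl ?exprn_ge0.
rewrite -natr1 exprS.
have ck : 0 <= c ^+ k by apply: exprn_ge0.
have kk : 0 <= (k%:R : R) * (c * c ^+ k) * z by rewrite !mulr_ge0 ?ler0n.
nra.
Qed.

Lemma Rk_bound A Z k c z : opnorm A + z <= c -> opnorm Z <= z -> 1 <= c ->
  opnorm (Rk A Z k) <= k%:R ^+ 2 * c ^+ k * z ^+ 2.
Proof.
move=> hc hZ c1; have c0 : 0 <= c by apply: le_trans c1.
have z0 : 0 <= z by apply: le_trans hZ; apply: opnorm_ge0.
have hA : opnorm A <= c by apply: le_trans hc; rewrite lerDl.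
have hAZ : opnorm (A + Z) <= c.
  by apply: le_trans (opnorm_add _ _) _; apply: le_trans hc; rewrite lerD2l.
elim: k => [|k IH] /=.
  rewrite expr0n mul0r mul0r; apply: opnorm_leP => // x; rewrite mul0mx expr0n mul0r /sq big1 // => i _; rewrite mxE expr0n //.
apply: le_trans (opnorm_add _ _) _.
have e1 : opnorm (Rk A Z k *m (A + Z)) <= k%:R ^+ 2 * c ^+ k * z ^+ 2 * c.
  apply: le_trans (opnorm_mul _ _) _; apply: ler_pM => //; apply: opnorm_ge0.
have e2 : opnorm (Lk A Z k *m Z) <= k%:R * c ^+ k * z * z.
  apply: le_trans (opnorm_mul _ _) _; apply: ler_pM => //; try apply: opnorm_ge0.
  exact: Lk_bound.
have e3 : (k%:R : R) * c ^+ k * z * z <= k%:R * (c * c ^+ k) * z * z.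
  apply: ler_wpM2r => //; apply: ler_wpM2r => //; apply: ler_wpM2l; rewrite ?ler0n // ler_peMl ?exprn_ge0 //.
rewrite -natr1 [c ^+ k.+1]exprS.
have ck : 0 <= c ^+ k by apply: exprn_ge0.
have kk : 0 <= (k%:R : R) * (c * c ^+ k) * z * z by rewrite !mulr_ge0 ?ler0n.
have zz : 0 <= (c * c ^+ k) * z * z by rewrite !mulr_ge0.
nra.
Qed.

Lemma diag_exp (v : 'rV[R]_n) k : diag_mx v ^+ k = diag_mx (\row_j v 0 j ^+ k).
Proof.
elim: k => [|k IH].
  by rewrite expr0; apply/matrixP => i j; rewrite !mxE expr0.
by rewrite exprSr -mulmxE IH mulmx_diag; congr diag_mx; apply/rowP => j; rewrite !mxE exprSr.
Qed.

Lemma Lk_diag (v : 'rV[R]_n) Z k i j :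
  Lk (diag_mx v) Z k i j = DD k (v 0 i) (v 0 j) * Z i j.
Proof.
elim: k => [|k IH] /=; first by rewrite mxE mul0r.
rewrite mxE mul_mx_diag mxE IH diag_exp mul_diag_mx !mxE; ring.
Qed.

End Taylor.
Section First.
Variable R : realType.
Variable n : nat.

Lemma orthoC (Q : 'M[R]_n) : Q^T *m Q = 1%:M -> Q *m Q^T = 1%:M.
Proof. exact: mulmx1C. Qed.

Lemma opnormT (Q : 'M[R]_n) : Q^T *m Q = 1%:M -> opnorm Q^T <= 1.
Proof. by move=> QQ; apply: opnorm_orth; rewrite trmxK orthoC. Qed.

Lemma opnorm_mul3 (A B C : 'M[R]_n) : opnorm (A *m B *m C) <= opnorm A * opnorm B * opnorm C.
Proof.
apply: le_trans (opnorm_mul _ _) _; apply: ler_wpM2r; first exact: opnorm_ge0.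
exact: opnorm_mul.
Qed.

Lemma first_order (V U E : 'M[R]_n) (mu : 'rV[R]_n) (gam : 'M[R]_n) C :
  0 <= C -> (forall i j, `|gam i j| <= 2 * C) ->
  V^T *m V = 1%:M -> U^T *m U = 1%:M -> E = U *m diag_mx mu *m U^T ->
  opnorm (\matrix_(i, l) (gam i l * (V^T *m E *m V) i l))
    <= 2 * C * (1 + misalign U V * Num.sqrt n%:R) * opnorm E.
Proof.
move=> C0 hg VV UU EE.
have VV' := orthoC VV; have UU' := orthoC UU.
set M := diag_mx mu.
set Et := V^T *m E *m V.
set W := V^T *m U.
have C20 : 0 <= 2 * C by rewrite mulr_ge0.
have nE := opnorm_ge0 E.
have ME : M = U^T *m E *m U.
  by rewrite EE !mulmxA UU mul1mx -(mulmxA M) UU mulmx1.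
have hM : opnorm M <= opnorm E.
  by rewrite ME -{2}(trmxK U); apply: opnorm_conj; rewrite trmxK.
have hEt : Et = W *m M *m W^T.
  by rewrite /Et EE /W trmx_mul trmxK !mulmxA.
set s := opnorm (U - V).
have s0 : 0 <= s by apply: opnorm_ge0.
have hW : opnorm W <= 1.
  apply: le_trans (opnorm_mul _ _) _.
  rewrite -[1]mulr1; apply: ler_pM; rewrite ?opnorm_ge0 ?opnormT ?opnorm_orth //.
have hD : opnorm (Et - M) <= 2 * s * opnorm E.
  have -> : Et - M = W *m M *m (U^T *m (V - U)) + (V^T *m (U - V)) *m M.
    rewrite hEt /W !mulmxBr !mulmxBl UU VV mul1mx !mulmx1 trmx_mul trmxK.
    by rewrite !mulmxA addrA subrK.
  apply: le_trans (opnorm_add _ _) _.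
  have e1 : opnorm (W *m M *m (U^T *m (V - U))) <= 1 * opnorm E * s.
    apply: le_trans (opnorm_mul3 _ _ _) _.
    apply: ler_pM; rewrite ?mulr_ge0 ?opnorm_ge0 //.
      by apply: ler_pM; rewrite ?opnorm_ge0.
    apply: le_trans (opnorm_mul _ _) _.
    rewrite -[s]mul1r; apply: ler_pM; rewrite ?opnorm_ge0 ?opnormT //.
    by rewrite -opprB; apply: opnorm_opp.
  have e2 : opnorm ((V^T *m (U - V)) *m M) <= 1 * s * opnorm E.
    apply: le_trans (opnorm_mul _ _) _.
    apply: ler_pM; rewrite ?mulr_ge0 ?opnorm_ge0 //.
    apply: le_trans (opnorm_mul _ _) _.
    by apply: ler_pM; rewrite ?opnorm_ge0 ?opnormT.
  move: e1 e2; rewrite !mul1r => e1 e2.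
  have -> : 2 * s * opnorm E = opnorm E * s + s * opnorm E by ring.
  exact: lerD.
have split : \matrix_(i, l) (gam i l * Et i l) =
    diag_mx (\row_i (gam i i * mu 0 i)) + \matrix_(i, l) (gam i l * (Et - M) i l).
  apply/matrixP => i l; rewrite !mxE.
  case: (eqVneq i l) => [<-|il]; first by rewrite !mulr1n; ring.
  by rewrite !mulr0n; ring.
rewrite split; apply: le_trans (opnorm_add _ _) _.
have f1 : opnorm (diag_mx (\row_i (gam i i * mu 0 i))) <= 2 * C * opnorm E.
  apply: diag_le; first by rewrite mulr_ge0.
  move=> i; rewrite mxE normrM; apply: ler_pM; rewrite ?normr_ge0 //.
  apply: le_trans hM; have := entry_le M i i; by rewrite /M mxE eqxx mulr1n.
have f2 : opnorm (\matrix_(i, l) (gam i l * (Et - M) i l)) <=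
    2 * C * Num.sqrt n%:R * (2 * s * opnorm E).
  apply: le_trans (schur_le _ C20 hg) _.
  by apply: ler_wpM2l; rewrite ?mulr_ge0 ?sqrtr_ge0.
apply: le_trans (lerD f1 f2) _.
rewrite /misalign -/s.
have sq0 : 0 <= Num.sqrt (n%:R : R) by apply: sqrtr_ge0.
have : 0 <= 2 * C * Num.sqrt n%:R * (s ^+ 2 * opnorm E).
  by rewrite !mulr_ge0 ?sqr_ge0.
nra.
Qed.

End First.
Section Main.
Variable R : realType.
Variable N : nat.
Implicit Types (A B : 'M[R]_N).

Lemma conj_exp (V A : 'M[R]_N) k : V^T *m V = 1%:M -> V *m V^T = 1%:M ->
  (V *m A *m V^T) ^+ k = V *m A ^+ k *m V^T.
Proof.
move=> VV VV'; elim: k => [|k IH]; first by rewrite !expr0 mulmx1 VV'.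
rewrite exprS -mulmxE IH !mulmxA -(mulmxA _ V^T V) VV mulmx1.
by rewrite -!mulmxA [A *m (A ^+ k *m V^T)]mulmxA mulmxE -exprS.
Qed.

Lemma Hn_conj h (V A : 'M[R]_N) k : V^T *m V = 1%:M -> V *m V^T = 1%:M ->
  Hn h k (V *m A *m V^T) = V *m Hn h k A *m V^T.
Proof.
move=> VV VV'; rewrite /Hn mulmx_sumr mulmx_suml; apply: eq_bigr => m _.
by rewrite conj_exp // -scalemxAr -scalemxAl.
Qed.

Lemma Hn_intertwine h (P S1 S2 : 'M[R]_N) k : S1 *m P = P *m S2 ->
  Hn h k S1 *m P = P *m Hn h k S2.
Proof.
move=> SP.
have H : forall m, S1 ^+ m *m P = P *m S2 ^+ m.
  elim=> [|m IH]; first by rewrite !expr0 mul1mx mulmx1.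
  by rewrite exprS -mulmxE -mulmxA IH mulmxA SP -mulmxA mulmxE -exprS.
rewrite /Hn mulmx_suml mulmx_sumr; apply: eq_bigr => m _.
by rewrite -scalemxAl -scalemxAr H.
Qed.

Lemma perm_orth (s : 'S_N) : (perm_mx s : 'M[R]_N)^T *m perm_mx s = 1%:M.
Proof. by rewrite tr_perm_mx -perm_mxM mulVg perm_mx1. Qed.

End Main.
Unset Implicit Arguments.

Theorem theorem2 (R : realType) (N : nat) (S V : 'M[R]_N) (lam : 'rV[R]_N)
    (h : nat -> R) (C : R) :
  S^T = S ->
  V^T *m V = 1%:M ->
  S = V *m diag_mx lam *m V^T ->
  0 < C ->
  analytic_filter h ->
  (forall l : R, `|freq_resp h l| <= 1) ->
  integral_lipschitz h C ->
  exists K : R,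
    forall (Shat E U : 'M[R]_N) (mu : 'rV[R]_N) (eps : R),
      Shat^T = Shat ->
      E^T = E ->
      U^T *m U = 1%:M ->
      E = U *m diag_mx mu *m U^T ->
      relpert S Shat E ->
      dist_rel S Shat <= opnorm E ->
      opnorm E <= eps ->
      perm_dist_norm (graph_filter h S) (graph_filter h Shat)
        <= 2 * C * (1 + misalign U V * Num.sqrt (N%:R)) * eps + K * eps ^+ 2.
Proof.
move=> Ssym VV SE Cp an hb IL.
have C0 : 0 <= C := ltW Cp.
have VV' : V *m V^T = 1%:M := orthoC VV.
set Lam := diag_mx lam.
set a := opnorm Lam.
have a0 : 0 <= a := opnorm_ge0 Lam.
set c := a + 1.
have c1 : 1 <= c by rewrite /c lerDr.
have cp : 0 < c by apply: lt_le_trans c1.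
have [T [T0 HT]] := coef_bound an (ltW cp).
set rho := (2 * c)^-1.
have rhop : 0 < rho by rewrite invr_gt0 mulr_gt0.
set K := T * (2 * a) ^+ 2 + 2 / rho ^+ 2.
exists K.
move=> Shat E U mu eps Shs Es UU EE [P [s Ps] PE] _ Eeps.
subst P; set Pm := (perm_mx s : 'M[R]_N).
have PP : Pm^T *m Pm = 1%:M := @perm_orth R N s.
have PP' : Pm *m Pm^T = 1%:M := orthoC PP.
set HS := graph_filter h S; set HSh := graph_filter h Shat.
have Hinf : perm_dist_norm HS HSh <= opnorm (Pm *m HS - HSh *m Pm).
  apply: ge_inf.
    by exists 0 => _ [Q _ <-]; apply: opnorm_ge0.
  exists (perm_mx (s^-1)%g); first by exists (s^-1)%g.
  by rewrite tr_perm_mx invgK.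
apply: le_trans Hinf _.
have [cS nS] := filt_sym Ssym an hb.
have [cT nT] := filt_sym Shs an hb.
set Y := Pm *m HS - HSh *m Pm.
set nE := opnorm E.
have nE0 : 0 <= nE := opnorm_ge0 E.
set del := misalign U V.
have del0 : 0 <= del.
  rewrite /del /misalign; have := opnorm_ge0 (U - V); set u := opnorm (U - V) => u0.
  rewrite (_ : (u + 1) ^+ 2 - 1 = u * (u + 2)); last by ring.
  by rewrite mulr_ge0 // addr_ge0.
have coef0 : 0 <= 2 * C * (1 + del * Num.sqrt N%:R).
  apply: mulr_ge0; first by apply: mulr_ge0.
  by apply: addr_ge0 => //; apply: mulr_ge0 => //; apply: sqrtr_ge0.
have K0 : 0 <= K.
  rewrite /K; apply: addr_ge0; first by apply: mulr_ge0 => //; apply: sqr_ge0.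
  by apply: divr_ge0 => //; apply: sqr_ge0.
suff HY : opnorm Y <= 2 * C * (1 + del * Num.sqrt N%:R) * nE + K * nE ^+ 2.
  apply: le_trans HY _; apply: lerD.
    by apply: ler_wpM2l.
  by apply: ler_wpM2l => //; rewrite ler_sqr ?nnegrE //; apply: le_trans Eeps.
have [big|small] := ltrP rho nE.
  have hY : opnorm Y <= 2.
    apply: le_trans (opnorm_add _ _) _.
    have e1 : opnorm (Pm *m HS) <= 1.
      apply: le_trans (opnorm_mul _ _) _.
      rewrite -[X in _ <= X]mulr1.
      by apply: ler_pM; [exact: opnorm_ge0 | exact: opnorm_ge0 | exact: opnorm_orth PP | exact: nS].
    have e2 : opnorm (- (HSh *m Pm)) <= 1.
      apply: le_trans (opnorm_opp _) _; apply: le_trans (opnorm_mul _ _) _.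
      rewrite -[X in _ <= X]mulr1.
      by apply: ler_pM; [exact: opnorm_ge0 | exact: opnorm_ge0 | exact: nT | exact: opnorm_orth PP].
    by have := lerD e1 e2.
  apply: le_trans hY _.
  have h2 : 2 <= 2 / rho ^+ 2 * nE ^+ 2.
    have rho0 := ltW rhop; have bg := ltW big.
    have r2 : rho ^+ 2 <= nE ^+ 2 by rewrite ler_sqr ?nnegrE.
    have e : 2 / rho ^+ 2 * rho ^+ 2 = 2 by rewrite divfK // expf_neq0 // gt_eqF.
    rewrite -[X in X <= _]e; apply: ler_wpM2l => //.
    by apply: divr_ge0 => //; apply: sqr_ge0.
  have h3 : 0 <= T * (2 * a) ^+ 2 * nE ^+ 2 by rewrite !mulr_ge0 ?sqr_ge0.
  have h4 : 0 <= 2 * C * (1 + del * Num.sqrt N%:R) * nE by apply: mulr_ge0.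
  rewrite /K mulrDl; clear -h2 h3 h4; lra.
set Et := V^T *m E *m V.
set Xt := Et *m Lam + Lam *m Et.
set B := S + (E *m S + S *m E).
have hEt : opnorm Et <= nE.
  by rewrite /Et -{2}(trmxK V); apply: opnorm_conj; rewrite trmxK.
set z := 2 * a * nE.
have z0 : 0 <= z by rewrite /z !mulr_ge0.
have hXt : opnorm Xt <= z.
  apply: le_trans (opnorm_add _ _) _.
  have e1 : opnorm (Et *m Lam) <= nE * a.
    by apply: le_trans (opnorm_mul _ _) _; apply: ler_wpM2r.
  have e2 : opnorm (Lam *m Et) <= a * nE.
    by apply: le_trans (opnorm_mul _ _) _; apply: ler_wpM2l.
  have := lerD e1 e2; rewrite /z.
  by rewrite (_ : nE * a + a * nE = 2 * a * nE) //; ring.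
have z1 : z <= 1.
  have : nE * (2 * c) <= 1 by rewrite -ler_pdivlMr ?mulr_gt0 // div1r.
  rewrite /z /c => H.
  have : 0 <= 2 * nE by rewrite mulr_ge0.
  clear -H a0 nE0; nra.
have hac : opnorm Lam + z <= c by rewrite /c lerD2l.
have SE' : S = V *m Lam *m V^T by [].
have e1 : V *m (Et *m Lam) *m V^T = E *m S.
  by rewrite SE' /Et !mulmxA VV' mul1mx.
have e2 : V *m (Lam *m Et) *m V^T = S *m E.
  by rewrite SE' /Et !mulmxA -(mulmxA _ V V^T) VV' mulmx1.
have BE : B = V *m (Lam + Xt) *m V^T.
  by rewrite /B /Xt !mulmxDr !mulmxDl e1 e2 -SE'.
have ShP : Shat *m Pm = Pm *m B.
  have PE' : Pm^T *m Shat *m Pm = B := PE.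
  by rewrite -PE' !mulmxA PP' mul1mx.
pose F_ k := \sum_(m < k) h m *: Lk Lam Xt m.
pose G_ k := \sum_(m < k) h m *: Rk Lam Xt m.
have YkE : forall k, Pm *m Hn h k S - Hn h k Shat *m Pm
    = - (Pm *m V *m F_ k *m V^T) - (Pm *m V *m G_ k *m V^T).
  move=> k.
  rewrite (Hn_intertwine _ _ ShP) BE SE !Hn_conj //.
  have -> : Hn h k (Lam + Xt) = Hn h k Lam + F_ k + G_ k.
    rewrite /Hn /F_ /G_ -!big_split /=; apply: eq_bigr => m _.
    by rewrite taylor_exp !scalerDr.
  rewrite !(mulmxDr, mulmxDl) !mulmxA.
  by rewrite !opprD !addrA subrr add0r.
pose F := \matrix_(i, l) (gl h (lam 0 i) (lam 0 l) * Xt i l).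
have cF : mxcvg F_ F.
  move=> i l; rewrite mxE.
  have -> : (fun k => F_ k i l) = (fun k => Gs h k (lam 0 i) (lam 0 l) * Xt i l).
    apply: funext => k; rewrite /F_ summxE /Gs mulr_suml; apply: eq_bigr => m _.
    by rewrite mxE Lk_diag mulrA.
  by apply: cvgMl; apply: Gs_cvg.
have cY : mxcvg (fun k => Pm *m Hn h k S - Hn h k Shat *m Pm) Y.
  by apply: mxcvg_add; [apply: mxcvg_mull | apply: mxcvg_opp; apply: mxcvg_mulr].
have cR : mxcvg (fun k => - (Pm *m V *m G_ k *m V^T)) (Y + Pm *m V *m F *m V^T).
  have H := mxcvg_add cY (mxcvg_mulr (P := V^T) (mxcvg_mull (P := Pm *m V) cF)).
  have eqf : (fun k => - (Pm *m V *m G_ k *m V^T)) =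
     (fun k => (Pm *m Hn h k S - Hn h k Shat *m Pm) + Pm *m V *m F_ k *m V^T).
    by apply: funext => k; rewrite YkE addrAC addNr add0r.
  by rewrite eqf.
have hG : forall k, opnorm (- (Pm *m V *m G_ k *m V^T)) <= T * z ^+ 2.
  move=> k; apply: le_trans (opnorm_opp _) _.
  apply: le_trans (opnorm_mul _ _) _.
  rewrite -[X in _ <= X]mulr1; apply: ler_pM; rewrite ?mulr_ge0 ?opnorm_ge0 ?sqr_ge0 //; last exact: opnormT.
  apply: le_trans (opnorm_mul _ _) _.
  rewrite -[X in _ <= X]mul1r; apply: ler_pM; rewrite ?mulr_ge0 ?opnorm_ge0 ?sqr_ge0 //; last first.
    apply: le_trans (opnorm_sum _ _ _) _.
    apply: le_trans (_ : \sum_(m < k) `|h m| * (m%:R ^+ 2 * c ^+ m) * z ^+ 2 <= _); last first.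
      by rewrite -mulr_suml; apply: ler_wpM2r; [apply: sqr_ge0 | exact: HT].
    apply: ler_sum => m _; apply: le_trans (opnorm_scale _ _) _.
    rewrite -mulrA; apply: ler_wpM2l; first exact: normr_ge0.
    exact: (Rk_bound m hac hXt c1).
  apply: le_trans (opnorm_mul _ _) _.
  by rewrite -[X in _ <= X]mulr1; apply: ler_pM; rewrite ?opnorm_ge0 ?opnorm_orth.
have hYF := mxcvg_norm cR hG.
pose gam := \matrix_(i, l) (gl h (lam 0 i) (lam 0 l) * (lam 0 i + lam 0 l)).
have FE : F = \matrix_(i, l) (gam i l * Et i l).
  rewrite /F /gam /Xt /Lam mul_mx_diag mul_diag_mx.
  apply/matrixP => i l; rewrite !mxE; ring.
have hgam : forall i j, `|gam i j| <= 2 * C.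
  by move=> i j; rewrite /gam mxE normrM; apply: gl_bound.
have hF : opnorm F <= 2 * C * (1 + del * Num.sqrt N%:R) * nE.
  rewrite FE; exact: (first_order C0 hgam VV UU EE).
have hPF : opnorm (Pm *m V *m F *m V^T) <= opnorm F.
  apply: le_trans (opnorm_mul _ _) _.
  rewrite -[X in _ <= X]mulr1; apply: ler_pM; rewrite ?mulr_ge0 ?opnorm_ge0 //; last exact: opnormT.
  apply: le_trans (opnorm_mul _ _) _.
  rewrite -[X in _ <= X]mul1r; apply: ler_pM; rewrite ?opnorm_ge0 //.
  apply: le_trans (opnorm_mul _ _) _.
  by rewrite -[X in _ <= X]mulr1; apply: ler_pM; rewrite ?opnorm_ge0 ?opnorm_orth.
have -> : Y = (Y + Pm *m V *m F *m V^T) + - (Pm *m V *m F *m V^T) by rewrite addrK.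
apply: le_trans (opnorm_add _ _) _.
have hPF' := le_trans (opnorm_opp _) hPF.
have hTz : T * z ^+ 2 <= K * nE ^+ 2.
  have ez : T * z ^+ 2 = T * (2 * a) ^+ 2 * nE ^+ 2 by rewrite /z exprMn mulrA.
  have eK : K * nE ^+ 2 = T * (2 * a) ^+ 2 * nE ^+ 2 + 2 / rho ^+ 2 * nE ^+ 2 by rewrite /K; ring.
  rewrite ez eK lerDl; apply: mulr_ge0; last exact: sqr_ge0.
  by apply: divr_ge0 => //; apply: sqr_ge0.
have := lerD hYF (le_trans hPF' hF).
move=> H; apply: le_trans H _.
by rewrite addrC lerD2l.
Qed.
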